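(* Fix $j\ge0$. Let $f_j(z)$, $g_j(z)$, $h_j(z)$ be the generating functions, in which $z^n$ marks paths of length $n$, of the following partial Dyck paths ending at height $j$: <ul> <li>$f_j$: all descents have odd length, and the path either ends with an up-step or is the empty path (the empty path only when $j=0$);</li> <li>$g_j$: the path ends with a down-step, its last descent has odd length, and all earlier descents have odd length;</li> <li>$h_j$: the path ends with a down-step, its last descent has even length, and all earlier descents have odd length.</li> </ul> Then $f_0=1$, $f_j=v_1^{-j}$ for $j\ge1$, and for all $j\ge0$ $$g_j=\frac{z(1+h_0)}{v_1^{\,j+1}},\qquad h_j=\frac{z\,g_0}{v_1^{\,j+1}},$$ where $$g_0=\frac{z v_1}{v_1^2-z^2},\qquad h_0=\frac{z^2}{v_1^2-z^2}.$$ Equivalently, in terms of the bivariate series, one has $\sum_{j\ge0}f_ju^j=1-\frac{u}{u-v_1}$, $\sum_{j\ge0}g_ju^j=\frac{-z(1+h_0)}{u-v_1}$ and $\sum_{j\ge0}h_ju^j=\frac{-zg_0}{u-v_1}$.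
   Context: A partial Dyck path (prefix of a Dyck path) is a finite sequence of up-steps $(1,1)$ and down-steps $(1,-1)$ starting at height $0$ and never going below height $0$; its length is its number of steps. A descent is a maximal run of consecutive down-steps; its length is the number of down-steps in it. Let $v_1=v_1(z)$ denote the unique root $u$ of the cubic $$z u^3+(z^2-1)u^2-z^3u+z^2=0$$ which is a Laurent series in $z$ with $z\,v_1(z)\to1$ as $z\to0$. Its expansion begins $v_1=\frac1z-z-z^5-2z^7-\cdots$. *)

(* Defs.v *)
From HB Require Import structures.
From mathcomp Require Import all_boot all_order all_algebra.
Set Implicit Arguments. Unset Strict Implicit. Unset Printing Implicit Defensive.
Import Order.TTheory GRing.Theory Num.Theory.

(* Partial Dyck paths: a path is a seq bool, true = up-step (1,1),     *)
(* false = down-step (1,-1).                                           *)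

Fixpoint hgt_from (h : nat) (s : seq bool) : option nat :=
  match s with
  | [::] => Some h
  | true :: s' => hgt_from h.+1 s'
  | false :: s' => if h is h'.+1 then hgt_from h' s' else None
  end.

Definition pdyck_ending (j : nat) (s : seq bool) : bool := hgt_from 0 s == Some j.

Fixpoint desc_aux (cur : nat) (s : seq bool) : seq nat :=
  match s with
  | [::] => if cur is 0 then [::] else [:: cur]
  | true :: s' => (if cur is 0 then [::] else [:: cur]) ++ desc_aux 0 s'
  | false :: s' => desc_aux cur.+1 s'
  end.
Definition descents (s : seq bool) : seq nat := desc_aux 0 s.

Definition f_prop (s : seq bool) : bool :=
  all odd (descents s) && ((s == [::]) || last false s).

Definition ends_down (s : seq bool) : bool := ~~ last true s.

Definition g_prop (s : seq bool) : bool :=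
  let ds := descents s in
  [&& ends_down s, odd (last 0%N ds) & all odd (take (size ds).-1 ds)].

Definition h_prop (s : seq bool) : bool :=
  let ds := descents s in
  [&& ends_down s, ~~ odd (last 0%N ds) & all odd (take (size ds).-1 ds)].

Definition npaths (P : seq bool -> bool) (j n : nat) : nat :=
  #|[set t : n.-tuple bool | pdyck_ending j t && P t]|.

Local Open Scope ring_scope.

Definition fps := nat -> rat.

Definition fconst (c : rat) : fps := fun n => if n is 0%N then c else 0.
Definition fone : fps := fconst 1.
Definition fX : fps := fun n => (n == 1%N)%:R.
Definition fadd (a b : fps) : fps := fun n => a n + b n.
Definition fopp (a : fps) : fps := fun n => - a n.
Definition fmul (a b : fps) : fps := fun n => \sum_(i < n.+1) a i * b (n - i)%N.
Definition fpow (a : fps) (k : nat) : fps := iter k (fmul a) fone.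

(* multiplicative inverse of a series with nonzero constant term *)
Fixpoint finv_list (a : fps) (n : nat) : seq rat :=
  match n with
  | 0%N => [:: (a 0%N)^-1]
  | n'.+1 => let l := finv_list a n' in
      rcons l (- (a 0%N)^-1 * \sum_(i < n'.+1) a i.+1 * nth 0 l (n' - i)%N)
  end.
Definition finv (a : fps) : fps := fun n => nth 0 (finv_list a n) n.

Definition fGF (j : nat) : fps := fun n => (npaths f_prop j n)%:R.
Definition gGF (j : nat) : fps := fun n => (npaths g_prop j n)%:R.
Definition hGF (j : nat) : fps := fun n => (npaths h_prop j n)%:R.

(* Formal Laurent series: (k, a) represents z^(-k) * a.                *)
(* Equality of Laurent series is the relation leqv.                    *)
Definition laurent := (nat * fps)%type.

Definition lemb (a : fps) : laurent := (0%N, a).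
Definition lz : laurent := lemb fX.
Definition lone : laurent := lemb fone.
Definition lzero : laurent := lemb (fconst 0).
Definition lmul (x y : laurent) : laurent := ((x.1 + y.1)%N, fmul x.2 y.2).
Definition ladd (x y : laurent) : laurent :=
  ((x.1 + y.1)%N, fadd (fmul (fpow fX y.1) x.2) (fmul (fpow fX x.1) y.2)).
Definition lopp (x : laurent) : laurent := (x.1, fopp x.2).
Definition lsub (x y : laurent) : laurent := ladd x (lopp y).
Definition lpow (x : laurent) (k : nat) : laurent := iter k (lmul x) lone.
(* inverse; this is the true inverse whenever the representative's series
   has nonzero constant term, which is the case for every use below *)
Definition linv (x : laurent) : laurent := (0%N, fmul (fpow fX x.1) (finv x.2)).
Definition ldiv (x y : laurent) : laurent := lmul x (linv y).
Definition leqv (x y : laurent) : Prop :=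
  forall n, fmul (fpow fX y.1) x.2 n = fmul (fpow fX x.1) y.2 n.

(* the Laurent series z^(-1) * V; with V 0 = 1 this is exactly a Laurent
   series u with z*u -> 1 as z -> 0 *)
Definition lv1 (V : fps) : laurent := (1%N, V).

Definition cubic (u : laurent) : laurent :=
  ladd (ladd (lmul lz (lpow u 3))
             (lmul (lsub (lpow lz 2) lone) (lpow u 2)))
       (ladd (lopp (lmul (lpow lz 3) u)) (lpow lz 2)).

(* Main.v *)
Require Import Defs.
From mathcomp Require Import all_boot all_order all_algebra.
From mathcomp Require Import zify.
Set Implicit Arguments. Unset Strict Implicit. Unset Printing Implicit Defensive.

Fixpoint run (cur : nat) (s : seq bool) : nat :=
  match s with [::] => cur | true :: s' => run 0 s' | false :: s' => run cur.+1 s' end.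
Fixpoint dcomp (cur : nat) (s : seq bool) : seq nat :=
  match s with [::] => [::]
  | true :: s' => (if cur is 0 then [::] else [:: cur]) ++ dcomp 0 s'
  | false :: s' => dcomp cur.+1 s' end.
Definition opt (c : nat) : seq nat := if c is 0 then [::] else [:: c].

Lemma desc_split cur s : desc_aux cur s = dcomp cur s ++ opt (run cur s).
Proof.
elim: s cur => [|[] s IH] cur /=; first by case: cur.
  by rewrite IH catA.
by rewrite IH.
Qed.

Lemma run_rcons cur s b : run cur (rcons s b) = if b then 0 else (run cur s).+1.
Proof. elim: s cur => [|[] s IH] cur /=; by [case: b | rewrite IH]. Qed.

Lemma comp_rcons cur s b :
  dcomp cur (rcons s b) = dcomp cur s ++ (if b then opt (run cur s) else [::]).
Proof.
elim: s cur => [|[] s IH] cur /=.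
- by case: b; case: cur.
- by rewrite IH catA.
- by rewrite IH.
Qed.

Definition cls (s : seq bool) : nat :=
  if all odd (dcomp 0 s) then
    (if run 0 s == 0 then 0 else if odd (run 0 s) then 1 else 2) else 3.
Definition stepT (c : nat) : nat := if c <= 1 then 0 else 3.
Definition stepF (c : nat) : nat :=
  match c with 0 => 1 | 1 => 2 | 2 => 1 | _ => 3 end.

Lemma cls_rcons s b : cls (rcons s b) = if b then stepT (cls s) else stepF (cls s).
Proof.
rewrite /cls run_rcons comp_rcons; case: b.
  rewrite all_cat; case: (all odd (dcomp 0 s)) => /=; last by [].
  case: (run 0 s) => [|r] //=; rewrite andbT; by case: (odd r).
rewrite cats0; case: (all odd (dcomp 0 s)) => //=.
case: (run 0 s) => [|r] //=; by case: (odd r).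
Qed.

Lemma hgt_rcons h s b : hgt_from h (rcons s b) =
  if hgt_from h s is Some k then
    (if b then Some k.+1 else if k is k'.+1 then Some k' else None) else None.
Proof.
elim: s h => [|c s IH] h /=; first by case: b; case: h.
case: c; first exact: IH.
by case: h.
Qed.

Lemma pdT j s : pdyck_ending j (rcons s true) = (0 < j) && pdyck_ending j.-1 s.
Proof.
rewrite /pdyck_ending hgt_rcons; case: (hgt_from 0 s) => [k|]; case: j => //=.
Qed.

Lemma pdF j s : pdyck_ending j (rcons s false) = pdyck_ending j.+1 s.
Proof.
rewrite /pdyck_ending hgt_rcons; case: (hgt_from 0 s) => [[|k]|] //=.
Qed.

Lemma run0_last s : (s == [::]) || last false s = (run 0 s == 0).
Proof.
elim/last_ind: s => [|s b _] //=.
have -> : (rcons s b == [::]) = false by case: s.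
by rewrite last_rcons run_rcons; case: b.
Qed.

Lemma ends_run s : ends_down s = (run 0 s != 0).
Proof.
elim/last_ind: s => [|s b _] //=.
by rewrite /ends_down last_rcons run_rcons; case: b.
Qed.

Lemma f_cls s : f_prop s = (cls s == 0).
Proof.
rewrite /f_prop /descents desc_split run0_last /cls all_cat.
case: (all odd (dcomp 0 s)); case: (run 0 s) => [|r] //=.
by case: (odd r).
Qed.

Lemma last_take_cat (l : seq nat) x :
  (last 0 (l ++ [:: x]) = x) * (take (size (l ++ [:: x])).-1 (l ++ [:: x]) = l).
Proof.
split; first by rewrite cats1 last_rcons.
by rewrite size_cat addn1 /= take_size_cat.
Qed.

Lemma g_cls s : g_prop s = (cls s == 1).
Proof.
rewrite /g_prop /descents desc_split ends_run /cls.
case: (run 0 s) => [|r] /=; first by case: (all odd _).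
rewrite !last_take_cat /=.
by case: (all odd (dcomp 0 s)); case: (odd r).
Qed.

Lemma h_cls s : h_prop s = (cls s == 2).
Proof.
rewrite /h_prop /descents desc_split ends_run /cls.
case: (run 0 s) => [|r] /=; first by case: (all odd _).
rewrite !last_take_cat /=.
by case: (all odd (dcomp 0 s)); case: (odd r).
Qed.

Fixpoint allseq (n : nat) : seq (seq bool) :=
  if n is m.+1 then [seq rcons s true | s <- allseq m] ++ [seq rcons s false | s <- allseq m]
  else [:: [::]].

Lemma mem_rcons_map (l : seq (seq bool)) s b c :
  (rcons s b \in [seq rcons x c | x <- l]) = (b == c) && (s \in l).
Proof.
apply/mapP/andP => [[x xl] /rcons_inj [-> ->] //| [/eqP -> sl]].
by exists s.
Qed.

Lemma mem_allseq n s : (s \in allseq n) = (size s == n).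
Proof.
elim: n s => [|n IH] s /=; first by rewrite inE size_eq0.
case/lastP: s => [|s b].
  by rewrite mem_cat; apply/negbTE; rewrite negb_or; apply/andP; split;
     apply/mapP => [[x _]]; case: x.
rewrite mem_cat !mem_rcons_map IH size_rcons eqSS. by case: b; rewrite /= ?andbF ?orbF.

Qed.

Lemma uniq_allseq n : uniq (allseq n).
Proof.
elim: n => [|n IH] //=.
rewrite cat_uniq !map_inj_uniq //; try exact: rcons_injl.
rewrite IH andbT /=; apply/hasPn => x /mapP [y _ ->].
by rewrite /= mem_rcons_map.
Qed.

Lemma card_count (Q : pred (seq bool)) n :
  #|[set t : n.-tuple bool | Q t]| = count Q (allseq n).
Proof.
rewrite cardsE cardE /enum_mem size_filter.
have -> : (count Q (allseq n)) = count Q (map val (enum {: n.-tuple bool})).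
  apply/permP; apply: uniq_perm; first exact: uniq_allseq.
    by rewrite map_inj_uniq ?enum_uniq //; exact: val_inj.
  move=> s; rewrite mem_allseq; apply/idP/mapP => [/eqP Hs | [t _ ->]].
    by exists (Tuple (introT eqP Hs)) => //; rewrite mem_enum.
  by rewrite size_tuple.
by rewrite count_map enumT; apply: eq_count.
Qed.

Definition Nc (c j n : nat) : nat :=
  count (fun s => pdyck_ending j s && (cls s == c)) (allseq n).

Lemma Nc_S c j n : Nc c j n.+1 =
  count (fun s => ((0 < j) && pdyck_ending j.-1 s) && (stepT (cls s) == c)) (allseq n) +
  count (fun s => pdyck_ending j.+1 s && (stepF (cls s) == c)) (allseq n).
Proof.
rewrite /Nc /= count_cat !count_map; congr (_ + _); apply: eq_count => s /=.
  by rewrite pdT cls_rcons.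
by rewrite pdF cls_rcons.
Qed.

Lemma count_or (T : Type) (p q r : pred T) l : (forall x, ~~ (q x && r x)) ->
  count (fun x => p x && (q x || r x)) l = count (fun x => p x && q x) l + count (fun x => p x && r x) l.
Proof.
move=> H; elim: l => [|x l IH] //=; rewrite IH.
move: (H x); case: (p x); case: (q x); case: (r x) => //= _; lia.
Qed.

Lemma count_false (T : Type) (p : pred T) l : (forall x, ~~ p x) -> count p l = 0.
Proof. by move=> H; elim: l => //= x l ->; rewrite (negbTE (H x)). Qed.

Lemma Nc_0 c j : Nc c j 0 = ((j == 0) && (c == 0)).
Proof. by rewrite /Nc /= addn0 /pdyck_ending /=; case: j; case: c. Qed.

Ltac clsc s := case: (cls s) => [|[|[|?]]]; rewrite /= ?andbF ?andbT ?orbF ?orbT //.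

Lemma Nf_S0 n : Nc 0 0 n.+1 = 0.
Proof. by rewrite Nc_S !count_false //= => s; clsc s. Qed.

Lemma Nf_S j n : Nc 0 j.+1 n.+1 = Nc 0 j n + Nc 1 j n.
Proof.
rewrite Nc_S [X in _ + X]count_false ?addn0; last by move=> s; clsc s.
rewrite /Nc -count_or; last by move=> s; clsc s.
by apply: eq_count => s /=; clsc s.
Qed.

Lemma Ng_S j n : Nc 1 j n.+1 = Nc 0 j.+1 n + Nc 2 j.+1 n.
Proof.
rewrite Nc_S count_false ?add0n; last by move=> s; case: j => [|j] /=; clsc s.
rewrite /Nc -count_or; last by move=> s; clsc s.
by apply: eq_count => s /=; clsc s.
Qed.

Lemma Nh_S j n : Nc 2 j n.+1 = Nc 1 j.+1 n.
Proof.
rewrite Nc_S count_false ?add0n; last by move=> s; case: j => [|j] /=; clsc s.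
by apply: eq_count => s /=; clsc s.
Qed.

Lemma npathsE j n :
  (npaths f_prop j n = Nc 0 j n) * (npaths g_prop j n = Nc 1 j n) * (npaths h_prop j n = Nc 2 j n).
Proof.
rewrite /npaths (card_count (fun s => pdyck_ending j s && f_prop s))
  (card_count (fun s => pdyck_ending j s && g_prop s))
  (card_count (fun s => pdyck_ending j s && h_prop s)) /Nc.
split; [split|]; apply: eq_count => s.
- by rewrite /= f_cls.
- by rewrite /= g_cls.
- by rewrite /= h_cls.
Qed.

From Stdlib Require Import Ring FunctionalExtensionality.
Import Order.TTheory GRing.Theory Num.Theory.
Local Open Scope ring_scope.
Notation finv := Defs.finv.

Lemma fps_ext (a b : fps) : (forall n, a n = b n) -> a = b.
Proof. exact: functional_extensionality. Qed.

Definition tp (m : nat) (a : fps) : {poly rat} := \poly_(i < m.+1) a i.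

Lemma fmul_tp m n a b : (n <= m)%N -> fmul a b n = (tp m a * tp m b)`_n.
Proof.
move=> le_nm; rewrite coefM /fmul; apply: eq_bigr => [[i /= Hi]] _.
rewrite /tp !coef_poly.
have -> : (i < m.+1)%N by apply: leq_trans Hi _.
have -> : (n - i < m.+1)%N by rewrite ltnS (leq_trans (leq_subr _ _)).
by [].
Qed.

Lemma coefM_low n (p p' q q' : {poly rat}) :
  (forall i, (i <= n)%N -> p`_i = p'`_i) -> (forall i, (i <= n)%N -> q`_i = q'`_i) ->
  (p * q)`_n = (p' * q')`_n.
Proof.
move=> Hp Hq; rewrite !coefM; apply: eq_bigr => [[i /= Hi]] _.
by rewrite (Hp i Hi) (Hq _ (leq_subr _ _)).
Qed.

Lemma fmul_comm a b : fmul a b = fmul b a.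
Proof. by apply: fps_ext => n; rewrite (@fmul_tp n n a b (leqnn n)) (@fmul_tp n n b a (leqnn n)) mulrC. Qed.

Lemma fmul_assoc a b c : fmul a (fmul b c) = fmul (fmul a b) c.
Proof.
apply: fps_ext => n; rewrite (@fmul_tp n n _ _ (leqnn n)) (@fmul_tp n n _ _ (leqnn n)).
rewrite (@coefM_low n _ (tp n a) _ (tp n b * tp n c)); last first.
- by move=> i Hi; rewrite /tp coef_poly ltnS Hi (@fmul_tp n i _ _ Hi).
- by [].
rewrite [RHS](@coefM_low n _ (tp n a * tp n b) _ (tp n c)).
- by rewrite mulrA.
- by move=> i Hi; rewrite /tp coef_poly ltnS Hi (@fmul_tp n i _ _ Hi).
- by [].
Qed.

Lemma fmul_1l a : fmul fone a = a.
Proof.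
apply: fps_ext => n; rewrite /fmul big_ord_recl /= subn0 mul1r big1 ?addr0 //.
by move=> i _; rewrite mul0r.
Qed.

Lemma fmul_addl a b c : fmul (fadd a b) c = fadd (fmul a c) (fmul b c).
Proof.
apply: fps_ext => n; rewrite /fmul /fadd -big_split /=; apply: eq_bigr => i _.
by rewrite mulrDl.
Qed.

Lemma fps_rt : ring_theory (fconst 0) fone fadd fmul (fun a b => fadd a (fopp b)) fopp (@eq fps).
Proof.
constructor.
- by move=> x; apply: fps_ext => n; rewrite /fadd /fconst; case: n => [|n]; rewrite add0r.
- by move=> x y; apply: fps_ext => n; rewrite /fadd addrC.
- by move=> x y z; apply: fps_ext => n; rewrite /fadd addrA.
- exact: fmul_1l.
- exact: fmul_comm.
- exact: fmul_assoc.
- exact: fmul_addl.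
- by [].
- by move=> x; apply: fps_ext => n; rewrite /fadd /fopp /fconst subrr; case: n.
Qed.

Add Ring fpsR : fps_rt.


Lemma fmul0 a b : fmul a b 0 = a 0%N * b 0%N.
Proof. by rewrite /fmul big_ord1. Qed.

Lemma fX_S a n : fmul fX a n.+1 = a n.
Proof.
rewrite /fmul big_ord_recl big_ord_recl /= big1 ?addr0.
  by rewrite /fX /bump /= mul0r add0r mul1r subSS subn0.
by move=> i _; rewrite /fX /bump /= !add1n /= mul0r.
Qed.

Lemma fX_0 a : fmul fX a 0 = 0.
Proof. by rewrite fmul0 /fX mul0r. Qed.

Lemma size_finv a n : size (finv_list a n) = n.+1.
Proof. by elim: n => [|n IH] //=; rewrite size_rcons IH. Qed.

Lemma finv_nth a n k : (k <= n)%N -> seq.nth 0 (finv_list a n) k = finv a k.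
Proof.
elim: n => [|n IH] Hk; first by move: Hk; rewrite leqn0 => /eqP ->.
rewrite leq_eqVlt in Hk; case/orP: Hk => [/eqP -> //| Hk].
by rewrite /= nth_rcons size_finv Hk IH.
Qed.

Lemma finv_S a n :
  finv a n.+1 = - (a 0%N)^-1 * \sum_(i < n.+1) a i.+1 * finv a (n - i)%N.
Proof.
rewrite /finv /= nth_rcons size_finv ltnn eqxx; congr (_ * _).
by apply: eq_bigr => i _; rewrite finv_nth // leq_subr.
Qed.

Lemma finvK a : a 0%N != 0 -> fmul a (finv a) = fone.
Proof.
move=> Ha; apply: fps_ext => [[|n]].
  by rewrite fmul0 /finv /= mulfV.
rewrite /fmul big_ord_recl subn0 finv_S mulrA mulrN mulfV // mulN1r.
rewrite /fone /fconst.
have -> : \sum_(i < n.+1) a (bump 0 i) * finv a (n.+1 - bump 0 i)%N =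
          \sum_(i < n.+1) a i.+1 * finv a (n - i)%N.
  by apply: eq_bigr => i _; rewrite /bump /= add1n subSS.
by rewrite addNr.
Qed.

Lemma fpowS a k : fpow a k.+1 = fmul a (fpow a k).
Proof. by []. Qed.

Lemma fpow_mul a b k : fpow (fmul a b) k = fmul (fpow a k) (fpow b k).
Proof. elim: k => [|k IH]; first by rewrite /fpow /=; ring. rewrite !fpowS IH; ring. Qed.

Lemma fpow0 a k : fpow a k 0%N = (a 0%N) ^+ k.
Proof. elim: k => [|k IH] //; by rewrite fpowS fmul0 IH exprS. Qed.

Lemma finv_unique a b : fmul a b = fone -> a 0%N != 0 -> finv a = b.
Proof.
move=> H Ha.
have E : fmul (fmul a (finv a)) b = fmul (finv a) (fmul a b) by ring.
rewrite finvK // H in E.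
have E2 : b = finv a by rewrite -[b]fmul_1l E; ring.
by rewrite E2.
Qed.

Lemma fX_cancel a : fmul fX a = fconst 0 -> a = fconst 0.
Proof.
move=> H; apply: fps_ext => n; rewrite -fX_S H.
by case: n.
Qed.

Lemma sub_eq a b : fadd a (fopp b) = fconst 0 -> a = b.
Proof.
move=> H; have -> : a = fadd (fadd a (fopp b)) b by ring.
rewrite H; ring.
Qed.

Definition Dq V := fadd (fpow V 2) (fopp (fpow fX 4)).
Definition cubp V := fadd (fadd (fpow V 3) (fmul (fadd (fpow fX 2) (fopp fone)) (fpow V 2)))
  (fadd (fopp (fmul (fpow fX 4) V)) (fpow fX 4)).

Lemma ids V W E (H1 : fmul V W = fone) (H2 : fmul (Dq V) E = fone) (Hc : cubp V = fconst 0) :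
  let w := fmul (fpow fX 1) W in let h := fmul (fpow fX 4) E in
  let g := fmul (fpow fX 2) (fmul V E) in
  [/\ w = fmul fX (fadd fone (fmul fX (fmul (fadd fone h) w))),
      h = fmul fX (fmul g w) &
      g = fmul fX (fmul (fadd fone h) w)].
Proof.
move=> w h g.
have e1 : fadd (fmul V W) (fopp fone) = fconst 0 by rewrite H1; ring.
have e2 : fadd (fmul (Dq V) E) (fopp fone) = fconst 0 by rewrite H2; ring.
pose E1 := fadd (fmul V W) (fopp fone).
pose E2 := fadd (fmul (Dq V) E) (fopp fone).
split; apply: sub_eq.
- pose t := fadd w (fopp (fmul fX (fadd fone (fmul fX (fmul (fadd fone h) w))))).
  pose X3 := fpow fX 3. pose X7 := fpow fX 7.
  pose S := fadd (fopp (fmul fX (cubp V)))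
     (fadd (fmul (fadd (fmul fX (Dq V)) (fopp (fmul X3 (fpow V 2)))) E1)
       (fadd (fopp (fmul X7 E2)) (fopp (fmul X7 (fmul E1 E2))))).
  transitivity (fadd (fmul (fmul W E) S) (fopp (fmul t (fadd E1 (fadd E2 (fmul E1 E2)))))).
    rewrite /t /S /E1 /E2 /X3 /X7 /w /h /g /cubp /Dq /fpow /=; ring.
  rewrite /S /E1 /E2 e1 e2 Hc; ring.
- transitivity (fmul (fopp (fmul (fpow fX 4) E)) E1).
    rewrite /E1 /w /h /g /fpow /=; ring.
  rewrite /E1 e1; ring.
- transitivity (fadd (fmul (fopp (fmul (fpow fX 2) (fmul V E))) E1) (fmul (fmul (fpow fX 2) W) E2)).
    rewrite /E1 /E2 /w /h /g /Dq /fpow /=; ring.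
  rewrite /E1 /E2 e1 e2; ring.
Qed.

Lemma uniq_rec (F G H : nat -> fps) :
  F 0%N = fone -> (forall k, F k.+1 = fmul fX (fadd (F k) (G k))) ->
  (forall j, G j = fmul fX (fadd (F j.+1) (H j.+1))) ->
  (forall j, H j = fmul fX (G j.+1)) ->
  forall n j, [/\ fGF j n = F j n, gGF j n = G j n & hGF j n = H j n].
Proof.
move=> F0 SF SG SH; elim=> [|n IH] j.
  rewrite /fGF /gGF /hGF !npathsE !Nc_0 andbF; split.
  - case: j => [|k]; first by rewrite F0.
    by rewrite SF fX_0.
  - by rewrite SG fX_0.
  - by rewrite SH fX_0.
rewrite /fGF /gGF /hGF !npathsE; split.
- case: j => [|k]; first by rewrite Nf_S0 F0.
  rewrite Nf_S SF fX_S natrD /fadd.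
  by case: (IH k) => <- <- _; rewrite /fGF /gGF !npathsE.
- rewrite Ng_S SG fX_S natrD /fadd.
  by case: (IH j.+1) => <- _ <-; rewrite /fGF /hGF !npathsE.
- rewrite Nh_S SH fX_S.
  by case: (IH j.+1) => _ <- _; rewrite /gGF !npathsE.
Qed.

Lemma leqv_zero x : leqv x lzero -> x.2 = fconst 0.
Proof.
move=> H.
have E : fmul (fpow fX 0) x.2 = fmul (fpow fX x.1) (fconst 0) by apply: fps_ext.
have E1 : fmul (fpow fX x.1) (fconst 0) = fconst 0 by ring.
by rewrite E1 /fpow /= fmul_1l in E.
Qed.

Lemma cub_of V : leqv (cubic (lv1 V)) lzero -> cubp V = fconst 0.
Proof.
move=> /leqv_zero.
rewrite /cubic /ladd /lmul /lpow /lsub /lopp /lz /lone /lemb /lv1 /=.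
rewrite /addn /addn_rec /= => H.
apply: fX_cancel; apply: fX_cancel; apply: fX_cancel; apply: fX_cancel.
rewrite -H /cubp /fpow /=; ring.
Qed.

Lemma lpowE x k : lpow x k = ((k * x.1)%N, fpow x.2 k).
Proof. elim: k => [|k IH] //; by rewrite /lpow /= -/(lpow x k) IH /lmul /= mulSn. Qed.

Theorem mainTheorem3 (V : fps) (HV0 : V 0%N = 1)
  (Hroot : leqv (cubic (lv1 V)) lzero) :
  let v1 := lv1 V in
  (forall n, fGF 0 n = fone n) /\
  (forall j : nat, (0 < j)%N -> leqv (lemb (fGF j)) (lpow (linv v1) j)) /\
  (forall j : nat,
     leqv (lemb (gGF j)) (ldiv (lmul lz (ladd lone (lemb (hGF 0)))) (lpow v1 j.+1))) /\
  (forall j : nat,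
     leqv (lemb (hGF j)) (ldiv (lmul lz (lemb (gGF 0))) (lpow v1 j.+1))) /\
  leqv (lemb (gGF 0)) (ldiv (lmul lz v1) (lsub (lpow v1 2) (lpow lz 2))) /\
  leqv (lemb (hGF 0)) (ldiv (lpow lz 2) (lsub (lpow v1 2) (lpow lz 2))).
Proof.
move=> v1.
have Hc := cub_of Hroot.
have H1 : fmul V (finv V) = fone by apply: finvK; rewrite HV0 oner_neq0.
have HD0 : Dq V 0%N = 1.
  by rewrite /Dq /fadd /fopp !fpow0 HV0 /fX /= expr1n expr0n /= subr0.
have H2 : fmul (Dq V) (finv (Dq V)) = fone by apply: finvK; rewrite HD0 oner_neq0.
have [R1 R2 R3] := ids H1 H2 Hc.
set W := finv V in H1 R1 R2 R3 *.
set E := finv (Dq V) in H2 R1 R2 R3 *.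
set w := fmul (fpow fX 1) W in R1 R2 R3 *.
set h := fmul (fpow fX 4) E in R1 R2 R3 *.
set g := fmul (fpow fX 2) (fmul V E) in R1 R2 R3 *.
pose F j := fpow w j.
pose G j := fmul fX (fmul (fadd fone h) (fpow w j.+1)).
pose H j := fmul fX (fmul g (fpow w j.+1)).
have SF : forall k, F k.+1 = fmul fX (fadd (F k) (G k)).
  move=> k; rewrite /F /G !fpowS.
  transitivity (fmul (fpow w k) (fmul fX (fadd fone (fmul fX (fmul (fadd fone h) w))))).
    rewrite -R1; ring.
  ring.
have SG : forall j, G j = fmul fX (fadd (F j.+1) (H j.+1)).
  move=> j; rewrite /F /G /H !fpowS R2; ring.
have SH : forall j, H j = fmul fX (G j.+1).
  move=> j; rewrite /G /H !fpowS R3; ring.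
have U := uniq_rec (erefl (F 0%N)) SF SG SH.
have eF : forall j, fGF j = F j by move=> j; apply: fps_ext => n; case: (U n j).
have eG : forall j, gGF j = G j by move=> j; apply: fps_ext => n; case: (U n j).
have eH : forall j, hGF j = H j by move=> j; apply: fps_ext => n; case: (U n j).
have fpow1 : forall k, fpow fone k = fone.
  by elim=> [|k IH] //; rewrite fpowS IH fmul_1l.
have fW : forall k, finv (fpow V k) = fpow W k.
  move=> k; apply: finv_unique; first by rewrite -fpow_mul H1 fpow1.
  by rewrite fpow0 HV0 expr1n oner_neq0.
have fX1 : fpow fX 1 = fX by rewrite /fpow /=; ring.
have fwk : forall k, fpow w k = fmul (fpow fX k) (fpow W k).
  by move=> k; rewrite /w fpow_mul fX1.
have fD : fadd (fmul fone (fmul V (fmul V fone)))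
                (fmul (fmul fX (fmul fX fone)) (fopp (fmul fX (fmul fX fone)))) = Dq V.
  by rewrite /Dq /fpow /=; ring.
have H0h : H 0%N = h by rewrite /H R2 /fpow /=; ring.
have G0g : G 0%N = g by rewrite /G R3 /fpow /=; ring.
split; first by move=> n; rewrite eF.
split.
  move=> j _ n; rewrite /leqv /lemb lpowE /= eF.
  by rewrite muln0 /F /w /W.
split.
  move=> j n; rewrite /leqv /lemb /ldiv /linv /lmul /ladd lpowE /= eG eH -(fpowS V j) fW muln1 H0h.
  apply: (congr1 (fun f : fps => f n)); rewrite /G fwk !fpowS; ring.
split.
  move=> j n; rewrite /leqv /lemb /ldiv /linv /lmul /ladd lpowE /= eG eH -(fpowS V j) fW muln1 G0g.
  apply: (congr1 (fun f : fps => f n)); rewrite /H fwk !fpowS; ring.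
split.
  move=> n; rewrite /leqv /lemb /ldiv /linv /lmul /lsub /lopp /ladd !lpowE /= eG fD -/E G0g.
  apply: (congr1 (fun f : fps => f n)); rewrite /g /fpow /=; ring.
move=> n; rewrite /leqv /lemb /ldiv /linv /lmul /lsub /lopp /ladd !lpowE /= eH fD -/E H0h.
apply: (congr1 (fun f : fps => f n)); rewrite /h /fpow /=; ring.
Qed.
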